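(* Let $n\in\mathbb{N}$ and let $G=(V,E)$ be a simple undirected graph with vertex set $V=[n]=\{1,\dots,n\}$. Then there exist a face $F$ of the linear ordering polytope $\mathrm{LOP}(2n)$ and an affine map $\alpha$ with $\alpha(F)=\mathrm{STAB}(G)$, i.e. the stable set polytope $\mathrm{STAB}(G)$ is an affine projection of a face of $\mathrm{LOP}(2n)$.
   Context: For $m\in\mathbb{N}$, a linear order on $[m]$ is a set $L$ of ordered pairs $(i,j)$, $i\neq j$, such that for each pair $i\neq j$ exactly one of $(i,j),(j,i)$ lies in $L$, and $L$ is transitive ($(i,j),(j,k)\in L\Rightarrow (i,k)\in L$). Its characteristic vector $\mathbf{y}\in\{0,1\}^{m(m-1)/2}$ has coordinates $y_{ij}$, $1\le i<j\le m$, with $y_{ij}=1$ if $(i,j)\in L$ and $y_{ij}=0$ if $(j,i)\in L$. The linear ordering polytope $\mathrm{LOP}(m)$ is the convex hull of all such characteristic vectors. The stable set polytope of a graph $G=([n],E)$ is $\mathrm{STAB}(G)=\mathrm{conv}\{\mathbf{x}\in\{0,1\}^n : x_i+x_j\le 1 \text{ for every edge } \{i,j\}\in E\}$. A hyperplane $H$ is supporting for a polytope $P$ if $P\cap H\neq\emptyset$ and $P$ lies entirely on one side of $H$; a face of $P$ is the intersection of $P$ with one or several supporting hyperplanes. A polytope $Q$ is an (affine) projection of a polytope $P$ if there is an affine map $\alpha$ with $\alpha(P)=Q$. *)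

(* Defs.v *)
From HB Require Import structures.
From mathcomp Require Import all_boot all_order all_algebra.
From mathcomp Require Import reals.
Set Implicit Arguments. Unset Strict Implicit. Unset Printing Implicit Defensive.
Import Order.TTheory GRing.Theory Num.Theory.
Local Open Scope ring_scope.

Notation pt R T := {ffun T -> R}.

Definition conv (R : realType) (T : finType) (S : pt R T -> Prop) : pt R T -> Prop :=
  fun x => exists (k : nat) (p : 'I_k -> pt R T) (w : 'I_k -> R),
    [/\ forall i, S (p i), forall i, 0 <= w i, \sum_i w i = 1
      & forall t, x t = \sum_i w i * p i t].

(* Coordinates of R^(m(m-1)/2): pairs (i,j) with i < j. *)
Definition lop_idx (m : nat) := {p : 'I_m * 'I_m | (p.1 < p.2)%N}.

Definition linear_order (m : nat) (L : rel 'I_m) : Prop :=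
  [/\ forall i, ~~ L i i,
      forall i j, i != j -> (L i j <-> ~~ L j i)
    & forall i j k, L i j -> L j k -> L i k].

Definition char_vec (R : realType) (m : nat) (L : rel 'I_m) : pt R (lop_idx m) :=
  [ffun p => if L (val p).1 (val p).2 then 1 else 0].

Definition LOP (R : realType) (m : nat) : pt R (lop_idx m) -> Prop :=
  conv (fun y => exists L : rel 'I_m, linear_order L /\ y = char_vec R L).

Definition simple_graph (n : nat) (e : rel 'I_n) : Prop :=
  (forall i, ~~ e i i) /\ (forall i j, e i j = e j i).

Definition STAB (R : realType) (n : nat) (e : rel 'I_n) : pt R 'I_n -> Prop :=
  conv (fun x => (forall i, x i = 0 \/ x i = 1) /\
                 (forall i j, e i j -> x i + x j <= 1)).

Definition dotp (R : realType) (T : finType) (a x : pt R T) : R :=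
  \sum_t a t * x t.

Definition supporting (R : realType) (T : finType) (P : pt R T -> Prop)
    (a : pt R T) (b : R) : Prop :=
  (exists x, P x /\ dotp a x = b) /\
  ((forall x, P x -> dotp a x <= b) \/ (forall x, P x -> b <= dotp a x)).

Definition face (R : realType) (T : finType) (P F : pt R T -> Prop) : Prop :=
  exists (k : nat) (a : 'I_k.+1 -> pt R T) (b : 'I_k.+1 -> R),
    (forall l, supporting P (a l) (b l)) /\
    (forall x, F x <-> (P x /\ forall l, dotp (a l) x = b l)).

Definition affine_map (R : realType) (T U : finType)
    (alpha : pt R T -> pt R U) : Prop :=
  exists (M : U -> T -> R) (c : pt R U),
    forall x, alpha x = [ffun u => \sum_t M u t * x t + c u].

(* Main.v *)
Require Import Defs.
From HB Require Import structures.
From mathcomp Require Import all_boot all_order all_algebra.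
From mathcomp Require Import reals.
From mathcomp Require Import zify ring lra.
Set Implicit Arguments. Unset Strict Implicit.
Import Order.TTheory GRing.Theory Num.Theory.
Local Open Scope ring_scope.

Lemma av_proof n (v : 'I_n) : (v < 2 * n)%N.
Proof. have := ltn_ord v; lia. Qed.
Lemma bv_proof n (v : 'I_n) : (n + v < 2 * n)%N.
Proof. have := ltn_ord v; lia. Qed.
Definition av n (v : 'I_n) : 'I_(2 * n) := Ordinal (av_proof v).
Definition bv n (v : 'I_n) : 'I_(2 * n) := Ordinal (bv_proof v).
Lemma pidx_proof n (v u : 'I_n) : ((av v, bv u).1 < (av v, bv u).2)%N.
Proof. rewrite /=; have := ltn_ord v; lia. Qed.
Definition pidx n (v u : 'I_n) : lop_idx (2 * n) := exist _ (av v, bv u) (pidx_proof v u).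

Definition rk n (s : nat -> bool) (i : nat) : nat :=
  if (i < n)%N then (if s i then 1 else 3) else (if s (i - n)%N then 2 else 0).
Definition key n (s : nat -> bool) (i : 'I_(2 * n)) : nat := (rk n s i * (2 * n) + i)%N.
Definition Ls n (s : nat -> bool) : rel 'I_(2 * n) := fun i j => (key s i < key s j)%N.

Lemma key_inj n (s : nat -> bool) : injective (@key n s).
Proof.
move=> i j h; apply: val_inj => /=.
have : key s i = key s j %[mod 2 * n] by rewrite h.
by rewrite /key !modnMDl !modn_small.
Qed.

Lemma Ls_lin n (s : nat -> bool) : linear_order (@Ls n s).
Proof.
split.
- by move=> i; rewrite /Ls ltnn.
- move=> i j hij; rewrite /Ls; have : key s i != key s j.
    by apply: contra hij => /eqP /key_inj ->.
  case: ltngtP => //= _ _; split => //.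
- by move=> i j k; rewrite /Ls; apply: ltn_trans.
Qed.

Lemma Ls_ab n (s : nat -> bool) (v : 'I_n) : Ls s (av v) (bv v) = s v.
Proof.
rewrite /Ls /key /rk /= (ltn_ord v).
have -> : (n + v < n)%N = false by lia.
have -> : (n + v - n)%N = v by lia.
have := ltn_ord v; case: (s v) => ?; apply/idP; lia.
Qed.

Lemma Ls_edge n (s : nat -> bool) (u v : 'I_n) : ~~ (s u && s v) -> ~~ Ls s (av v) (bv u).
Proof.
rewrite /Ls /key /rk /= (ltn_ord v).
have -> : (n + u < n)%N = false by lia.
have -> : (n + u - n)%N = u by lia.
have := ltn_ord v; have := ltn_ord u.
case: (s u); case: (s v) => //= ? ? _; apply/negP; lia.
Qed.
Definition aE (R : realType) n (e : rel 'I_n) : pt R (lop_idx (2 * n)) :=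
  [ffun p => if [exists u : 'I_n, exists v : 'I_n, e u v && (p == pidx v u)] then 1 else 0].

Lemma char_ge0 (R : realType) m (L : rel 'I_m) t : 0 <= char_vec R L t.
Proof. by rewrite ffunE; case: ifP. Qed.

Lemma dotp_aE_ge0 (R : realType) n (e : rel 'I_n) L :
  0 <= dotp (aE R e) (char_vec R L).
Proof.
apply: sumr_ge0 => t _; apply: mulr_ge0; last exact: char_ge0.
by rewrite ffunE; case: ifP.
Qed.

Lemma dotp_aE_eq0 (R : realType) n (e : rel 'I_n) L :
  dotp (aE R e) (char_vec R L) = 0 <-> forall u v, e u v -> ~~ L (av v) (bv u).
Proof.
split.
- move=> h u v euv.
  have ge : forall t, predT t -> 0 <= aE R e t * char_vec R L t.
    move=> t _; apply: mulr_ge0; last exact: char_ge0.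
    by rewrite ffunE; case: ifP.
  have := @psumr_eq0P R _ predT _ ge h (pidx v u) isT.
  rewrite !ffunE /=.
  have -> : [exists u0 : 'I_n, exists v0 : 'I_n, e u0 v0 && (pidx v u == pidx v0 u0)].
    by apply/existsP; exists u; apply/existsP; exists v; rewrite euv eqxx.
  by rewrite mul1r; case: (L _ _) => //= /eqP; rewrite oner_eq0.
- move=> h; apply: big1 => p _; rewrite !ffunE.
  case: ifP; last by rewrite mul0r.
  move=> /existsP [u /existsP [v /andP [euv /eqP ->]]] /=.
  by rewrite (negbTE (h _ _ euv)) mulr0.
Qed.

Lemma dotp_conv (R : realType) (T : finType) (a x : pt R T) k (w : 'I_k -> R) (p : 'I_k -> pt R T) :
  (forall t, x t = \sum_i w i * p i t) -> dotp a x = \sum_i w i * dotp a (p i).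
Proof.
move=> hx; rewrite /dotp.
under eq_bigr => t _ do rewrite hx mulr_sumr.
rewrite exchange_big /=; apply: eq_bigr => i _; rewrite mulr_sumr.
by apply: eq_bigr => t _; rewrite mulrCA.
Qed.

Lemma LOP_dotp_ge0 (R : realType) n (e : rel 'I_n) x :
  @LOP R (2 * n) x -> 0 <= dotp (aE R e) x.
Proof.
move=> [k [p [w [hp hw _ hx]]]]; rewrite (dotp_conv _ hx).
apply: sumr_ge0 => i _; apply: mulr_ge0 => //.
by have [L [_ ->]] := hp i; exact: dotp_aE_ge0.
Qed.

Lemma lin_no_both n (e : rel 'I_n) (L : rel 'I_(2 * n)) u v :
  linear_order L -> e u v -> (forall u v, e u v -> ~~ L (av v) (bv u)) ->
  (forall u v, e u v -> ~~ L (av u) (bv v)) ->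
  ~~ (L (av u) (bv u) && L (av v) (bv v)).
Proof.
move=> [irr tot tr] euv h1 h2; apply/negP => /andP [h3 h4].
have ne : forall (x y : 'I_n), av x != bv y.
  move=> x y; apply/eqP => /(congr1 val) /=; have := ltn_ord x; lia.
have ne' : forall (x y : 'I_n), bv x != av y by move=> x y; rewrite eq_sym.
have b1 : L (bv u) (av v).
  by have [_ ->] := tot _ _ (ne' u v) => //; exact: h1.
have b2 : L (bv v) (av u).
  by have [_ ->] := tot _ _ (ne' v u) => //; exact: h2.
have := irr (av u); rewrite (tr _ _ _ h3 (tr _ _ _ b1 (tr _ _ _ h4 b2))) //.
Qed.
Definition sP (R : realType) n (x : pt R 'I_n) : nat -> bool :=
  fun j => [exists v : 'I_n, (val v == j) && (x v == 1)].

Lemma sP_val (R : realType) n (x : pt R 'I_n) (v : 'I_n) : sP x v = (x v == 1).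
Proof.
apply/existsP/idP => [[v' /andP [/eqP h1 h2]]|h]; last by exists v; rewrite eqxx.
by have -> : v = v' by apply: val_inj.
Qed.

Theorem lemma1 (R : realType) (n : nat) (e : rel 'I_n) :
  simple_graph e ->
  exists (F : pt R (lop_idx (2 * n)) -> Prop)
         (alpha : pt R (lop_idx (2 * n)) -> pt R 'I_n),
    [/\ face (@LOP R (2 * n)) F, affine_map alpha
      & forall y, @STAB R n e y <-> exists x, F x /\ alpha x = y].
Proof.
move=> [irr sym].
exists (fun x => @LOP R (2 * n) x /\ dotp (aE R e) x = 0), (fun x => [ffun v => x (pidx v v)]).
split.
- exists 0%N, (fun _ => aE R e), (fun _ => 0); split.
  + move=> l; split.
    * exists (char_vec R (Ls (n := n) (fun _ => false))); split.
        exists 1%N, (fun _ => char_vec R (Ls (n := n) (fun _ => false))), (fun _ => 1).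
        split.
        - by move=> i; exists (Ls (n := n) (fun _ => false)); split; [exact: Ls_lin | reflexivity].
        - by move=> i; exact: ler01.
        - by rewrite big_ord1.
        - by move=> t; rewrite big_ord1 mul1r.
      by apply/dotp_aE_eq0 => u v _; apply: Ls_edge.
    * by right => x; exact: LOP_dotp_ge0.
  + by move=> x; split => [[hx h0]|[hx h]]; split => //; exact: (h ord0).
- exists (fun v t => if t == pidx v v then 1 else 0), 0 => x.
  apply/ffunP => v; rewrite !ffunE addr0.
  rewrite (bigD1 (pidx v v)) //= eqxx mul1r big1 ?addr0 // => t /negbTE ->.
  by rewrite mul0r.
- move=> y; split.
  + move=> [k [p [w [hp hw hs hy]]]].
    pose Li i := Ls (n := n) (sP (p i)).
    exists [ffun t => \sum_i w i * char_vec R (Li i) t]; split; [split|].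
    * exists k, (fun i => char_vec R (Li i)), w; split => // [i|t].
        by exists (Li i); split => //; exact: Ls_lin.
      by rewrite ffunE.
    * rewrite (@dotp_conv _ _ _ _ _ w (fun i => char_vec R (Li i))); last by move=> t; rewrite ffunE.
      apply: big1 => i _.
      have -> : dotp (aE R e) (char_vec R (Li i)) = 0; last by rewrite mulr0.
      apply/dotp_aE_eq0 => u v euv; apply: Ls_edge.
      rewrite !sP_val; have [h01 hst] := hp i.
      apply/negP => /andP [/eqP a /eqP b]; have := hst _ _ euv; rewrite a b; lra.
    * apply/ffunP => v; rewrite !ffunE hy; apply: eq_bigr => i _.
      rewrite ffunE /=; idtac.
      rewrite /Li Ls_ab sP_val; have [h01 _] := hp i.
      by case: (h01 v) => ->; rewrite ?eqxx // eq_sym oner_eq0.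
  + move=> [x [[[k [p [w [hp hw hs hx]]]] h0] <-]].
    have ge : forall i, predT i -> 0 <= w i * dotp (aE R e) (p i).
      move=> i _; apply: mulr_ge0 => //.
      by have [L [_ ->]] := hp i; exact: dotp_aE_ge0.
    rewrite (dotp_conv _ hx) in h0.
    have d0 : forall i, w i != 0 -> dotp (aE R e) (p i) = 0.
      move=> i wi; have := psumr_eq0P ge h0 (i := i) isT.
      by move/eqP; rewrite mulf_eq0 (negbTE wi) /= => /eqP.
    pose q i : pt R 'I_n := if w i == 0 then [ffun _ => 0] else [ffun v => p i (pidx v v)].
    exists k, q, w; split => //.
    * move=> i; rewrite /q; case: eqP => [_|/eqP wi].
        split => [j|j j' _]; rewrite !ffunE; [by left | by rewrite addr0 ler01].
      have [L [lin hpL]] := hp i.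
      have := d0 i wi; rewrite hpL => /dotp_aE_eq0 d1.
      split => [j|j j' ejj']; rewrite !ffunE ?hpL ?ffunE /=.
        by case: ifP => _; auto.
      have d2 : forall u v, e u v -> ~~ L (av u) (bv v).
        by move=> u v euv; apply: d1; rewrite sym.
      have := lin_no_both lin ejj' d1 d2.
      case: (L (av j) (bv j)); case: (L (av j') (bv j')) => // _; lra.
    * move=> t; rewrite ffunE hx; apply: eq_bigr => i _; rewrite /q.
      by case: eqP => [->|_]; rewrite ?mul0r // ffunE.
Qed.
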